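(* Let $\approx$ be an equinumerosity on $\mathbb W$. For finite sets $A,B\in\mathbb W$ we have $A\approx B$ if and only if $|A|=|B|$. Moreover, if $X\in\mathbb W$ is infinite and $A\in\mathbb W$ is finite, then $X\succ A$.
   Context: Let $\mathbb N=\{0,1,2,\dots\}$. Let $\mathbb{W}$ be the family of finitary point sets: sets $A\subseteq\bigcup_{k\ge1}\mathbb N^k$ of finite tuples of natural numbers (tuples of different lengths allowed) such that for every $n\in\mathbb N$ there is $h$ with $A\cap\{0,\dots,n\}^k=\emptyset$ for all $k>h$. Cartesian products are identified with concatenations: $A\times B=\{(a_1,\dots,a_k,b_1,\dots,b_h):(a_1,\dots,a_k)\in A,\ (b_1,\dots,b_h)\in B\}$; $\{n\}$ denotes the set whose only element is the 1-tuple $(n)$. $A,B\in\mathbb W$ are multipliable if distinct pairs $(a,b)\in A\times B$ have distinct concatenations. Given an equivalence relation $\approx$ on $\mathbb W$, write $A\succ B$, equivalently $B\prec A$, if there exist $A',B'\in\mathbb W$ with $B'\subsetneq A'$, $A\approx A'$ and $B\approx B'$. An equinumerosity is an equivalence relation $\approx$ on $\mathbb W$ such that for all $A,B\in\mathbb W$: (AP) $A\approx B$ iff $A\setminus B\approx B\setminus A$; (ZP) exactly one of $A\approx B$, $A\succ B$, $A\prec B$ holds; (TP) if $T$ is injective on $A$ and $T(a)$ is a permutation of the coordinates of $a$ for every $a\in A$, then $A\approx T[A]$; (UP) $A\times\{n\}\approx A$ for all $n\in\mathbb N$; (PP) if $A,B$ are multipliable, $A',B'$ are multipliable, $A\approx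 A'$ and $B\approx B'$, then $A\times B\approx A'\times B'$. *)

(* Defs.v *)
From mathcomp Require Import all_boot.
Set Implicit Arguments. Unset Strict Implicit. Unset Printing Implicit Defensive.

Definition pset := seq nat -> Prop.

Definition tuples_only (A : pset) : Prop := forall a, A a -> a <> [::].

Definition finitary (A : pset) : Prop :=
  forall n : nat, exists h : nat, forall a, A a -> h < size a -> ~~ all (fun x => x <= n) a.

Definition inW (A : pset) : Prop := tuples_only A /\ finitary A.

Definition setD (A B : pset) : pset := fun x => A x /\ ~ B x.

Definition proper_sub (B A : pset) : Prop :=
  (forall x, B x -> A x) /\ exists x, A x /\ ~ B x.

(* Cartesian product = concatenation *)
Definition setprod (A B : pset) : pset :=
  fun c => exists a b, A a /\ B b /\ c = a ++ b.

Definition sing (n : nat) : pset := fun c => c = [:: n].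

Definition image (T : seq nat -> seq nat) (A : pset) : pset :=
  fun c => exists a, A a /\ c = T a.

Definition multipliable (A B : pset) : Prop :=
  forall a b a' b', A a -> B b -> A a' -> B b' -> a ++ b = a' ++ b' -> a = a' /\ b = b'.

Definition succ (approx : pset -> pset -> Prop) (A B : pset) : Prop :=
  exists A' B', inW A' /\ inW B' /\ proper_sub B' A' /\ approx A A' /\ approx B B'.

Definition exactly_one3 (P Q R : Prop) : Prop :=
  (P /\ ~ Q /\ ~ R) \/ (~ P /\ Q /\ ~ R) \/ (~ P /\ ~ Q /\ R).

Definition equinumerosity (approx : pset -> pset -> Prop) : Prop :=
  (forall A, inW A -> approx A A) /\
  (forall A B, inW A -> inW B -> approx A B -> approx B A) /\
  (forall A B C, inW A -> inW B -> inW C -> approx A B -> approx B C -> approx A C) /\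
  (forall A B, inW A -> inW B -> (approx A B <-> approx (setD A B) (setD B A))) /\
  (forall A B, inW A -> inW B ->
     exactly_one3 (approx A B) (succ approx A B) (succ approx B A)) /\
  (forall (A : pset) (T : seq nat -> seq nat), inW A ->
     (forall a a', A a -> A a' -> T a = T a' -> a = a') ->
     (forall a, A a -> perm_eq (T a) a) ->
     approx A (image T A)) /\
  (forall A (n : nat), inW A -> approx (setprod A (sing n)) A) /\
  (forall A B A' B', inW A -> inW B -> inW A' -> inW B' ->
     multipliable A B -> multipliable A' B' -> approx A A' -> approx B B' ->
     approx (setprod A B) (setprod A' B')).

(* A is finite, enumerated without repetition by l; then |A| = size l *)
Definition enumerates (A : pset) (l : seq (seq nat)) : Prop :=
  uniq l /\ forall x, A x <-> x \in l.

Definition finite_set (A : pset) : Prop := exists l, enumerates A l.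

(* Main.v *)
Require Import Defs.
From Stdlib Require Import Classical FunctionalExtensionality PropExtensionality.
From mathcomp Require Import all_boot.

Set Implicit Arguments. Unset Strict Implicit. Unset Printing Implicit Defensive.

Lemma pset_ext (A B : pset) : (forall x, A x <-> B x) -> A = B.
Proof.
move=> H; apply: functional_extensionality => x; apply: propositional_extensionality; exact: H.
Qed.

Definition L (l : seq (seq nat)) : pset := fun x => x \in l.
Definition S (a : seq nat) : pset := fun c => c = a.

Lemma size_le_sumn (l : seq (seq nat)) x : x \in l -> size x <= sumn (map size l).
Proof.
elim: l => //= y l IH; rewrite in_cons => /orP [/eqP -> | /IH H].
  exact: leq_addr.
by apply: leq_trans H _; apply: leq_addl.
Qed.

Lemma inW_L l : [::] \notin l -> inW (L l).
Proof.
move=> Hn; split.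
  by move=> a Ha Ea; subst; rewrite Ha in Hn.
move=> n; exists (sumn (map size l)) => a Ha Hs.
by move: (size_le_sumn Ha); rewrite leqNgt Hs.
Qed.

Lemma inW_S a : a <> [::] -> inW (S a).
Proof.
move=> Hn; split; first by move=> x ->.
move=> n; exists (size a) => x -> ; by rewrite ltnn.
Qed.


Ltac destE E := case: E => Hrefl [Hsym [Htrans [HAP [HZP [HTP [HUP HPP]]]]]].

Lemma S_rcons approx (E : equinumerosity approx) a n :
  a <> [::] -> approx (S (rcons a n)) (S a).
Proof.
destE E => Ha.
have -> : S (rcons a n) = setprod (S a) (sing n).
  apply: pset_ext => x; split.
    by move=> ->; exists a, [:: n]; rewrite cats1.
  by case=> a' [b [-> [-> ->]]]; rewrite cats1.
exact: HUP (inW_S Ha).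
Qed.

Lemma S_head approx (E : equinumerosity approx) a :
  a <> [::] -> approx (S a) (S [:: head 0 a]).
Proof.
move=> Ha; have E' := E; destE E'.
elim/last_ind: a Ha => // a n IH _.
case: a IH => [|y a] IH.
  by apply: Hrefl; apply: inW_S.
apply: (Htrans _ (S (y :: a))); try apply: inW_S => //.
  exact: (@S_rcons approx E (y :: a) n).
by rewrite /= in IH *; apply: IH.
Qed.

Lemma S_one approx (E : equinumerosity approx) n m :
  approx (S [:: n]) (S [:: m]).
Proof.
have E' := E; destE E'.
have h1 := @S_rcons approx E [:: n] m ltac:(discriminate).
have h2 := @S_rcons approx E [:: m] n ltac:(discriminate).
have h3 := HTP (S [:: n; m]) (fun _ => [:: m; n]) (@inW_S [:: n; m] ltac:(discriminate)).
have e : Defs.image (fun _ => [:: m; n]) (S [:: n; m]) = S [:: m; n].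
  apply: pset_ext => x; split; first by case=> a [_ ->].
  by move=> ->; exists [:: n; m].
rewrite e in h3.
have W := @inW_S.
apply: (Htrans _ (S [:: n; m])); try apply: W => //.
  by apply: Hsym => //; apply: W.
apply: (Htrans _ (S [:: m; n])); try apply: W => //.
apply: h3.
  by move=> a a' -> ->.
  by move=> a ->; rewrite perm_sym (perm_catC [:: n] [:: m]).
exact: h2.
Qed.

Lemma S_any approx (E : equinumerosity approx) a b :
  a <> [::] -> b <> [::] -> approx (S a) (S b).
Proof.
move=> Ha Hb; have E' := E; destE E'.
have W := @inW_S.
apply: (Htrans _ (S [:: head 0 a])); try apply: W => //.
  exact: S_head.
apply: (Htrans _ (S [:: head 0 b])); try apply: W => //.
  exact: S_one.
by apply: Hsym; try apply: W => //; apply: S_head.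
Qed.

Lemma L_eq l l' : l =i l' -> L l = L l'.
Proof. by move=> H; apply: pset_ext => x; rewrite /L H. Qed.

Lemma L1 a : L [:: a] = S a.
Proof. by apply: pset_ext => x; rewrite /L /S in_cons in_nil orbF; split => [/eqP|->]. Qed.

Lemma L_union approx (E : equinumerosity approx) l1 l2 l3 :
  [::] \notin l1 -> [::] \notin l2 -> [::] \notin l3 ->
  (forall x, x \in l3 -> x \notin l1 /\ x \notin l2) ->
  approx (L l1) (L l2) -> approx (L (l3 ++ l1)) (L (l3 ++ l2)).
Proof.
move=> n1 n2 n3 D H; have E' := E; destE E'.
have nc : forall l l' : seq (seq nat), [::] \notin l -> [::] \notin l' -> [::] \notin l ++ l'.
  by move=> l l' h h'; rewrite mem_cat negb_or h h'.
apply: (proj2 (HAP _ _ (inW_L (nc _ _ n3 n1)) (inW_L (nc _ _ n3 n2)))).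
have e : forall l l' : seq (seq nat), (forall x, x \in l3 -> x \notin l) ->
   Defs.setD (L (l3 ++ l)) (L (l3 ++ l')) = Defs.setD (L l) (L l').
  move=> l l' Dl; apply: pset_ext => x; rewrite /Defs.setD /L !mem_cat.
  case h3: (x \in l3) => /=.
    by split; [case=> _ [] | rewrite (negbTE (Dl _ h3)); case].
  by [].
rewrite e; last by move=> x /D [].
rewrite e; last by move=> x /D [].
exact: (proj1 (HAP _ _ (inW_L n1) (inW_L n2)) H).
Qed.

Lemma fwd approx (E : equinumerosity approx) (l1 l2 : seq (seq nat)) :
  size l1 = size l2 -> uniq l1 -> uniq l2 -> [::] \notin l1 -> [::] \notin l2 ->
  approx (L l1) (L l2).
Proof.
have E' := E; destE E'.
elim: l1 l2 => [|a l1 IH] l2.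
  by move=> /esym /size0nil -> _ _ _ _; apply: Hrefl; apply: inW_L.
move=> Hs /= /andP [al1 u1] u2; rewrite in_cons negb_or => /andP [na n1] n2.
case al2: (a \in l2).
  have pr := perm_to_rem al2.
  rewrite (L_eq (perm_mem pr)).
  have n2' : [::] \notin rem a l2 by apply: contra n2; apply: mem_rem.
  have u2' : uniq (rem a l2) by apply: rem_uniq.
  have ar : a \notin rem a l2 by rewrite mem_rem_uniqF.
  apply: (@L_union approx E l1 (rem a l2) [:: a]) => //.
  - by rewrite in_cons negb_or na.
  - by move=> x; rewrite in_cons in_nil orbF => /eqP ->; split.
  apply: IH => //.
  by rewrite size_rem // -Hs.
case: l2 Hs al2 u2 n2 => [//|b l2] /= [Hs] al2 /andP [bl2 u2]; rewrite in_cons negb_or => /andP [nb n2].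
move/negbT: al2; rewrite in_cons negb_or => /andP [ab al2'].
have W : forall l, [::] \notin l -> inW (L l) by move=> l; apply: inW_L.
have nc : forall x (l : seq (seq nat)), x != [::] -> [::] \notin l -> [::] \notin x :: l.
  by move=> x l h h'; rewrite in_cons negb_or eq_sym h.
have an : a != [::] by rewrite eq_sym.
have bn : b != [::] by rewrite eq_sym.
apply: (Htrans _ (L (a :: l2))); try apply: W; try apply: nc => //.
  apply: (@L_union approx E l1 l2 [:: a]) => //.
  - by rewrite in_cons negb_or na.
  - by move=> x; rewrite in_cons in_nil orbF => /eqP ->; split.
  by apply: IH.
have h := @L_union approx E [:: a] [:: b] l2.
rewrite (L_eq (l:=l2 ++ [:: a]) (l':= a :: l2)) in h; last by move=> x; rewrite mem_cat !in_cons in_nil orbF orbC.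
rewrite (L_eq (l:=l2 ++ [:: b]) (l':= b :: l2)) in h; last by move=> x; rewrite mem_cat !in_cons in_nil orbF orbC.
apply: h => //.
- by rewrite in_cons negb_or na.
- by rewrite in_cons negb_or nb.
- move=> x xl2; rewrite !in_cons !in_nil !orbF; split.
    by apply: contra al2' => /eqP <-.
  by apply: contra bl2 => /eqP <-.
rewrite !L1; apply: S_any => //.
  by move=> e; rewrite e eqxx in na.
by move=> e; rewrite e eqxx in nb.
Qed.

Lemma lt_succ approx (E : equinumerosity approx) (l1 l2 : seq (seq nat)) :
  size l1 < size l2 -> uniq l1 -> uniq l2 -> [::] \notin l1 -> [::] \notin l2 ->
  succ approx (L l2) (L l1).
Proof.
move=> Hs u1 u2 n1 n2; have E' := E; destE E'.
set t := take (size l1) l2.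
have nt : [::] \notin t by apply: contra n2; apply: mem_take.
exists (L l2), (L t); split; first exact: inW_L.
split; first exact: inW_L.
split; last split; first last.
- apply: fwd => //; last by apply: take_uniq.
  by rewrite size_takel // ltnW.
- by apply: Hrefl; apply: inW_L.
split; first by move=> x; rewrite /L => /mem_take.
move: u2; rewrite -(cat_take_drop (size l1) l2) cat_uniq => /and3P [_ hd _].
have : 0 < size (drop (size l1) l2) by rewrite size_drop subn_gt0.
case ed: (drop (size l1) l2) => [//|x r] _.
exists x; rewrite /L; split.
  by rewrite -(cat_take_drop (size l1) l2) mem_cat ed in_cons eqxx orbT.
move: hd; rewrite ed /= negb_or => /andP [hx _].
by move/negP: hx.
Qed.

Lemma new_elt (X : pset) (l : seq (seq nat)) :
  ~ finite_set X -> uniq l -> (forall x, x \in l -> X x) -> exists x, X x /\ x \notin l.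
Proof.
move=> nf u H; apply: NNPP => nx; apply: nf; exists l; split => // x; split; last exact: H.
move=> Xx; by apply: NNPP => xl; apply: nx; exists x; split => //; apply/negP.
Qed.

Lemma inf_lists (X : pset) : ~ finite_set X -> forall n,
  exists l : seq (seq nat), uniq l /\ size l = n /\ (forall x, x \in l -> X x).
Proof.
move=> nf; elim=> [|n [l [u [s H]]]]; first by exists [::].
have [x [Xx xl]] := new_elt nf u H.
exists (x :: l); split; first by rewrite /= xl u.
split; first by rewrite /= s.
by move=> y; rewrite in_cons => /orP [/eqP -> | /H].
Qed.

Lemma enum_L (A : pset) l : enumerates A l -> A = L l.
Proof. by case=> _ H; apply: pset_ext => x; rewrite /L H. Qed.

Lemma inW_nil (A : pset) l : inW A -> enumerates A l -> [::] \notin l.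
Proof. by case=> T _ [_ H]; apply/negP => /H /T. Qed.

Theorem proposition1p8 (approx : pset -> pset -> Prop) :
  equinumerosity approx ->
  (forall (A B : pset) (lA lB : seq (seq nat)),
      inW A -> inW B -> enumerates A lA -> enumerates B lB ->
      (approx A B <-> size lA = size lB)) /\
  (forall (X A : pset), inW X -> inW A -> ~ finite_set X -> finite_set A ->
      succ approx X A).
Proof.
move=> E; have E' := E; destE E'.
split.
  move=> A B lA lB WA WB eA eB.
  have nA := inW_nil WA eA; have nB := inW_nil WB eB.
  have [uA _] := eA; have [uB _] := eB.
  split; last by move=> Hs; rewrite (enum_L eA) (enum_L eB); apply: fwd.
  move=> H; case: (ltngtP (size lA) (size lB)) => // hl.
    have s := lt_succ E hl uA uB nA nB.
    rewrite -(enum_L eA) -(enum_L eB) in s.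
    by case: (HZP _ _ WA WB) => [[_ [_ ?]]|[[? _]|[? _]]].
  have s := lt_succ E hl uB uA nB nA.
  rewrite -(enum_L eA) -(enum_L eB) in s.
  by case: (HZP _ _ WA WB) => [[_ [? _]]|[[? _]|[? _]]].
move=> X A WX WA nf [lA eA].
have nA := inW_nil WA eA; have [uA _] := eA.
have [l [u [s H]]] := inf_lists nf (size lA).
have [x [Xx xl]] := new_elt nf u H.
have nl : [::] \notin l by apply/negP => /H; case: WX => T _ /T.
exists X, (L l); split => //; split; first exact: inW_L.
split; first split; [by move=> y /H | by exists x; split => //; apply/negP | ].
split; first exact: Hrefl.
rewrite (enum_L eA); apply: fwd => //.
Qed.
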